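(* Let $\mathcal{X}=\langle P,K,V\rangle$ be a polyhedral model. For every cell $\tilde\sigma$ of $K$ and all $x,y\in\tilde\sigma$, $x\equiv y$, i.e. for every SLCS formula $\phi$, $\mathcal{X},x\models\phi\iff\mathcal{X},y\models\phi$. Consequently, for every formula $\phi$, $[\![\phi]\!]$ is a finite union of cells of $K$.
   Context: A $d$-simplex $\sigma\subseteq\mathbb{R}^m$ is the convex hull of $d+1$ affinely independent points $v_0,\dots,v_d$ (its vertices); the simplexes spanned by subsets of the vertices (including the empty simplex) are its faces, and $\tau\preceq\sigma$ means $\tau$ is a face of $\sigma$. The relative interior of $\sigma$ is $\tilde\sigma=\{\sum_i\lambda_iv_i:\lambda_i\in(0,1],\sum_i\lambda_i=1\}$. A simplicial complex $K$ is a finite set of simplexes of $\mathbb{R}^m$ closed under taking faces and such that the intersection of any two of its simplexes is a face of both. Its polyhedron is $|K|=\bigcup K$, with the subspace topology of $\mathbb{R}^m$; $\mathcal{C}$ and $\mathcal{I}$ denote closure and interior in this space. The cells of $K$ are the sets $\tilde\sigma$ for nonempty $\sigma\in K$; they form a partition $\tilde K$ of $|K|$. A path in a space $P$ is a continuous $\pi:[0,1]\to P$; $\pi(S)=\{\pi(s):s\in S\}$. Fix a finite set $AP$ of atomic propositions. A polyhedral model is $\mathcal{X}=\langle P,K,V\rangle$ with $K$ a simplicial complex, $P=|K|$, and $V:AP\to\mathcal{P}(P)$ such that each $V(p)$ is a union of cells of $K$ ($K$ is then called coherent with the model). SLCS formulas: $\phi::=\top\mid p\mid\neg\phi\mid\phi\wedge\phi\mid\Box\phi\mid\gamma(\phi,\phi)$,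 $p\in AP$. Semantics at $x\in P$, with $[\![\phi]\!]=\{x\in P:\mathcal{X},x\models\phi\}$: $\top$ always holds; $x\models p$ iff $x\in V(p)$; Boolean connectives as usual; $x\models\Box\phi$ iff $x\in\mathcal{I}([\![\phi]\!])$; $x\models\gamma(\phi,\psi)$ iff there is a path $\pi$ in $P$ with $\pi(0)=x$, $\pi((0,1))\subseteq[\![\phi]\!]$ and $\pi(1)\in[\![\psi]\!]$. Logical equivalence $\equiv$ on $P$: $x\equiv y$ iff $x$ and $y$ satisfy exactly the same SLCS formulas. *)

(* Defs.v *)
From HB Require Import structures.
From mathcomp Require Import all_boot all_order all_algebra.
From mathcomp Require Import all_classical all_reals all_analysis.
Set Implicit Arguments. Unset Strict Implicit. Unset Printing Implicit Defensive.
Import Order.TTheory GRing.Theory Num.Theory.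
Import numFieldNormedType.Exports.
Local Open Scope classical_set_scope.
Local Open Scope ring_scope.

Section Polyhedra.
Variables (R : realType) (m : nat).
Local Notation pt := 'rV[R]_m.

Definition conv (vs : seq pt) : set pt :=
  [set x | exists l : 'I_(size vs) -> R,
      (forall i, 0 <= l i) /\ \sum_(i < size vs) l i = 1 /\
      x = \sum_(i < size vs) l i *: vs`_i].

Definition open_conv (vs : seq pt) : set pt :=
  [set x | exists l : 'I_(size vs) -> R,
      (forall i, 0 < l i <= 1) /\ \sum_(i < size vs) l i = 1 /\
      x = \sum_(i < size vs) l i *: vs`_i].

Definition aff_indep (vs : seq pt) : Prop :=
  forall l : 'I_(size vs) -> R,
    \sum_(i < size vs) l i = 0 -> \sum_(i < size vs) l i *: vs`_i = 0 ->
    forall i, l i = 0.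

(** sigma is a simplex (possibly empty) *)
Definition simplex (s : set pt) : Prop :=
  exists vs, aff_indep vs /\ s = conv vs.

Definition face (t s : set pt) : Prop :=
  exists vs ws : seq pt, [/\ aff_indep vs, s = conv vs,
     {subset ws <= vs} & t = conv ws].

Definition relint (s : set pt) : set pt :=
  [set x | exists vs, [/\ aff_indep vs, s = conv vs & open_conv vs x]].

Definition simplicial_complex (K : set (set pt)) : Prop :=
  [/\ finite_set K,
      (forall s, K s -> simplex s),
      (forall s t, K s -> face t s -> K t) &
      (forall s t, K s -> K t -> face (s `&` t) s /\ face (s `&` t) t)].

Definition polyhedron (K : set (set pt)) : set pt :=
  \bigcup_(s in K) s.

Definition is_cell (K : set (set pt)) (C : set pt) : Prop :=
  exists s, [/\ K s, s !=set0 & C = relint s].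

Definition union_of_cells (K : set (set pt)) (A : set pt) : Prop :=
  exists F : set (set pt), (forall C, F C -> is_cell K C) /\ A = \bigcup_(C in F) C.

Definition polyhedral_model (AP : finType) (K : set (set pt)) (V : AP -> set pt) :=
  simplicial_complex K /\ forall p, union_of_cells K (V p).

End Polyhedra.

Inductive slcs (AP : Type) : Type :=
| FTop
| FAtom of AP
| FNeg of slcs AP
| FAnd of slcs AP & slcs AP
| FBox of slcs AP
| FGamma of slcs AP & slcs AP.
Arguments FTop {AP}.

Section Semantics.
Variables (R : realType) (m : nat) (AP : finType).
Local Notation pt := 'rV[R]_m.
Variables (K : set (set pt)) (V : AP -> set pt).
Local Notation P := (polyhedron K).

Definition sub_interior (S : set pt) : set pt :=
  [set x | P x /\ exists U : set pt, [/\ open U, U x & U `&` P `<=` S]].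

Definition path_in (pi : R -> pt) : Prop :=
  {within `[0, 1], continuous pi} /\ (forall s, s \in `[0, 1] -> P (pi s)).

Fixpoint sat (phi : slcs AP) : set pt :=
  match phi with
  | FTop => P
  | FAtom p => V p
  | FNeg f => P `\` sat f
  | FAnd f g => sat f `&` sat g
  | FBox f => sub_interior (sat f)
  | FGamma f g => [set x | P x /\ exists pi : R -> pt,
        [/\ path_in pi, pi 0 = x,
            (forall s, s \in `]0, 1[ -> sat f (pi s)) & sat g (pi 1)]]
  end.

End Semantics.

(* Main.v *)
Require Import Defs.
From HB Require Import structures.
From mathcomp Require Import all_boot all_order all_algebra.
From mathcomp Require Import all_classical all_reals all_analysis.
From mathcomp Require Import lra.
Require Import Defs.
Set Implicit Arguments. Unset Strict Implicit. Unset Printing Implicit Defensive.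
Import Order.TTheory GRing.Theory Num.Theory.
Import numFieldNormedType.Exports.
Local Open Scope classical_set_scope.
Local Open Scope ring_scope.

Section Geo.
Variables (R : realType) (m : nat).
Local Notation pt := 'rV[R]_m.

Lemma reindex n p (vs : 'I_n -> pt) (ws : 'I_p -> pt) (f : 'I_n -> 'I_p) (a : 'I_n -> R) :
  (forall j, a j != 0 -> ws (f j) = vs j) ->
  \sum_k (\sum_(j | f j == k) a j) = \sum_j a j /\
  \sum_k (\sum_(j | f j == k) a j) *: ws k = \sum_j a j *: vs j.
Proof.
move=> H; split; first by rewrite [RHS](partition_big f xpredT).
rewrite [RHS](partition_big f xpredT) //=; apply: eq_bigr => k _.
rewrite scaler_suml; apply: eq_bigr => j /eqP <-.
by have [->|/H ->] := eqVneq (a j) 0; first by rewrite !scale0r.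
Qed.

Lemma coef_le1 n (a : 'I_n -> R) : (forall i, 0 <= a i) -> \sum_i a i = 1 ->
  forall i, a i <= 1.
Proof.
move=> a0 a1 i; rewrite -a1 (bigD1 i) //= lerDl; exact: sumr_ge0.
Qed.

Lemma bary_uniq (vs : seq pt) (a b : 'I_(size vs) -> R) : aff_indep vs ->
  \sum_i a i = 1 -> \sum_i b i = 1 ->
  \sum_i a i *: vs`_i = \sum_i b i *: vs`_i -> forall i, a i = b i.
Proof.
move=> H a1 b1 ab i; apply/eqP; rewrite -subr_eq0; apply/eqP.
apply: (H (fun i => a i - b i)); first by rewrite sumrB a1 b1 subrr.
by rewrite (eq_bigr (fun i => a i *: vs`_i - b i *: vs`_i)) ?sumrB ?ab ?subrr // => j _; rewrite scalerBl.
Qed.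

Lemma open_conv_conv (vs : seq pt) : open_conv vs `<=` conv vs.
Proof. by move=> x [l [l0 [l1 ->]]]; exists l; split=> // i; case/andP: (l0 i) => /ltW. Qed.

Lemma relint_sub (s : set pt) : relint s `<=` s.
Proof. by move=> x [vs [_ -> /open_conv_conv]]. Qed.


Lemma conv_sub_expand (vs ws : seq pt) x : {subset ws <= vs} -> conv ws x ->
  exists b : 'I_(size vs) -> R, [/\ forall j, 0 <= b j, \sum_j b j = 1,
     x = \sum_j b j *: vs`_j & forall j, b j != 0 -> vs`_j \in ws].
Proof.
move=> wsv [a [a0 [a1 ->]]].
have fP (k : 'I_(size ws)) : (index (nth (0:pt)%R ws k) vs < size vs)%N.
  by rewrite index_mem; apply: wsv; exact: mem_nth.
pose f k := Ordinal (fP k).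
have fE k : vs`_(f k) = ws`_k.
  by rewrite /= nth_index //; apply: wsv; exact: mem_nth.
have [s1 s2] := @reindex (size ws) (size vs) (fun k => ws`_k) (fun j => vs`_j) f a
   (fun k _ => fE k).
exists (fun j => \sum_(k | f k == j) a k); split => //.
- by move=> j; apply: sumr_ge0.
- by rewrite s1.
- move=> j; case: (boolP (vs`_j \in ws)) => // nj.
  rewrite big1 ?eqxx // => k /eqP fkj; exfalso; move: nj.
  by rewrite -fkj fE mem_nth.
Qed.

Lemma conv_collapse (vs ws : seq pt) (b : 'I_(size vs) -> R) :
  (forall j, 0 <= b j) -> \sum_j b j = 1 -> (forall j, b j != 0 -> vs`_j \in ws) ->
  conv ws (\sum_j b j *: vs`_j).
Proof.
move=> b0 b1 bws.
have [j0 bj0] : exists j, b j != 0.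
  case: (pselect (exists j, b j != 0)) => // H; exfalso; move: b1.
  rewrite big1; first by move/eqP; rewrite eq_sym oner_eq0.
  move=> j _; by case: (eqVneq (b j) 0) => // bj; exfalso; apply: H; exists j.
have wpos : (0 < size ws)%N by move: (bws _ bj0); case: (ws).
pose k0 := Ordinal wpos.
pose g (j : 'I_(size vs)) := insubd k0 (index vs`_j ws).
have gE j : b j != 0 -> ws`_(g j) = vs`_j.
  by move=> /bws vj; rewrite /g /= insubdK ?nth_index // -topredE /= index_mem.
have [s1 s2] := @reindex (size vs) (size ws) (fun j => vs`_j) (fun k => ws`_k) g b gE.
exists (fun k => \sum_(j | g j == k) b j); split => //; first (by move=> k; apply: sumr_ge0); split; [by rewrite s1 | by rewrite s2]. Qed.

Lemma comb_expand n (us : 'I_n -> pt) (vs : seq pt) (al : 'I_n -> 'I_(size vs) -> R)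
   (rho : 'I_n -> R) :
 (forall i, us i = \sum_j al i j *: vs`_j) ->
 \sum_i rho i *: us i = \sum_j (\sum_i rho i * al i j) *: vs`_j.
Proof.
move=> H; under eq_bigr do rewrite H scaler_sumr.
rewrite exchange_big /=; apply: eq_bigr => j _; rewrite scaler_suml.
by apply: eq_bigr => i _; rewrite scalerA.
Qed.

Lemma comb_sum n p (al : 'I_n -> 'I_p -> R) (rho : 'I_n -> R) :
  (forall i, \sum_j al i j = 1) -> \sum_i rho i = 1 ->
  \sum_j (\sum_i rho i * al i j) = 1.
Proof.
move=> H r1; rewrite exchange_big /= -[RHS]r1; apply: eq_bigr => i _.
by rewrite -mulr_sumr H mulr1.
Qed.

Lemma conv_vertex (us : seq pt) (i : 'I_(size us)) : conv us us`_i.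
Proof.
exists (fun k => (k == i)%:R); split; first by move=> k; rewrite ler0n.
split.
  by rewrite (bigD1 i) //= eqxx big1 ?addr0 // => k /negbTE ->.
by rewrite (bigD1 i) //= eqxx scale1r big1 ?addr0 // => k /negbTE ->; rewrite scale0r.
Qed.


Lemma relint_in_face (K : set (set pt)) (t t' : set pt) z :
  simplicial_complex K -> K t -> K t' -> relint t z -> t' z -> t `<=` t'.
Proof.
move=> [_ _ _ HI] Kt Kt' rz t'z.
have [[vs [ws [ivs tv wsv tw]]] _] := HI _ _ Kt Kt'.
have tz : t z := relint_sub rz.
have [us [_ tu [lam [lam0 [lam1 zE]]]]] := rz.
have cw : conv ws z by rewrite -tw.
have [be [be0 be1 zb bws]] := conv_sub_expand wsv cw.
have : forall i : 'I_(size us), exists al : 'I_(size vs) -> R,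
    (forall j, 0 <= al j) /\ \sum_j al j = 1 /\ us`_i = \sum_j al j *: vs`_j.
  by move=> i; have : conv vs us`_i by rewrite -tv tu; exact: conv_vertex.
move/choice => [al alP].
have alE (i : 'I_(size us)) : us`_i = \sum_j al i j *: vs`_j by case: (alP i) => _ [].
have al1 (i : 'I_(size us)) : \sum_j al i j = 1 by case: (alP i) => _ [].
have al0 (i : 'I_(size us)) (j : 'I_(size vs)) : 0 <= al i j by case: (alP i).
have lam1' : \sum_i lam i = 1 by [].
have zE2 : z = \sum_j (\sum_i lam i * al i j) *: vs`_j by rewrite zE; exact: comb_expand.
have U := bary_uniq ivs (comb_sum al1 lam1') be1 (etrans (esym zE2) zb).
have alz (j : 'I_(size vs)) : vs`_j \notin ws -> forall i, al i j = 0.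
  move=> nj i; have bj : be j = 0.
    by case: (eqVneq (be j) 0) => // /bws; rewrite (negbTE nj).
  have ge : forall k, xpredT k -> 0 <= lam k * al k j.
    by move=> k _; apply: mulr_ge0 => //; case/andP: (lam0 k) => /ltW.
  have := psumr_eq0P ge (etrans (U j) bj) (i := i) isT.
  move/eqP; rewrite mulf_eq0 => /orP[/eqP l0|/eqP //].
  by have := lam0 i; rewrite l0 ltxx.
move=> w tw'.
have [rho [rho0 [rho1 wE]]] : conv us w by rewrite -tu.
have : conv ws w.
  rewrite wE (comb_expand rho alE); apply: conv_collapse.
  - by move=> j; apply: sumr_ge0 => i _; apply: mulr_ge0.
  - exact: comb_sum.
  - move=> j; case: (boolP (vs`_j \in ws)) => // nj.
    by rewrite big1 ?eqxx // => i _; rewrite alz ?mulr0.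
by rewrite -tw => -[].
Qed.


Lemma relint_eq (K : set (set pt)) (t t' : set pt) z :
  simplicial_complex K -> K t -> K t' -> relint t z -> relint t' z -> t = t'.
Proof.
move=> HK Kt Kt' r r'; apply/seteqP; split.
  exact: relint_in_face HK Kt Kt' r (relint_sub r').
exact: relint_in_face HK Kt' Kt r' (relint_sub r).
Qed.

Lemma carrier (K : set (set pt)) z : simplicial_complex K -> polyhedron K z ->
  exists t, K t /\ relint t z.
Proof.
move=> HK [s Ks sz]; have [_ Hs Hf _] := HK.
have [vs [ivs sv]] := Hs _ Ks.
have [a [a0 [a1 zE]]] : conv vs z by rewrite -sv.
have [j0 aj0] : exists j, 0 < a j.
  case: (pselect (exists j, 0 < a j)) => // H; exfalso; move: a1.
  rewrite big1; first by move/eqP; rewrite eq_sym oner_eq0.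
  move=> j _; apply/eqP; rewrite eq_le a0 andbT; rewrite leNgt; apply/negP => aj.
  by apply: H; exists j.
pose sel := [seq j <- enum 'I_(size vs) | 0 < a j].
pose ws := map (fun j : 'I_(size vs) => vs`_j) sel.
have sws : size ws = size sel by rewrite size_map.
pose h (k : 'I_(size ws)) := nth j0 sel k.
have hk (k : 'I_(size ws)) : (k < size sel)%N by rewrite -sws ltn_ord.
have h1 (k : 'I_(size ws)) : ws`_k = vs`_(h k) by rewrite /ws (nth_map j0).
have hinj : injective h.
  move=> k k' /eqP; rewrite /h nth_uniq ?hk //; last by rewrite filter_uniq ?enum_uniq.
  by move/eqP/val_inj.
have h3 (k : 'I_(size ws)) : 0 < a (h k).
  by have := mem_nth j0 (hk k); rewrite mem_filter => /andP[].
have h4 (j : 'I_(size vs)) : 0 < a j -> exists k, h k = j.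
  move=> aj; have js : j \in sel by rewrite mem_filter aj mem_enum.
  have ik : (index j sel < size ws)%N by rewrite sws index_mem.
  by exists (Ordinal ik); rewrite /h /= nth_index.
have sumh (l : 'I_(size ws) -> R) k : \sum_(k' | h k' == h k) l k' = l k.
  rewrite (big_pred1 k) // => k'; apply/eqP/eqP => [/hinj|->] //.
have iws : aff_indep ws.
  move=> l l0 l1 k.
  have [s1 s2] := @reindex (size ws) (size vs) (fun k => ws`_k) (fun j => vs`_j) h l
     (fun k _ => esym (h1 k)).
  have := ivs (fun j => \sum_(k | h k == j) l k) (etrans s1 l0) (etrans s2 l1) (h k).
  by rewrite sumh.
have wsK : K (conv ws).
  apply: (Hf _ _ Ks); exists vs, ws; split => //.
  by move=> v /mapP[j _ ->]; apply: mem_nth.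
exists (conv ws); split => //; exists ws; split => //.
exists (fun k => a (h k)); split.
  by move=> k; rewrite h3 coef_le1.
have [s1 s2] := @reindex (size ws) (size vs) (fun k => ws`_k) (fun j => vs`_j) h
   (fun k => a (h k)) (fun k _ => esym (h1 k)).
have ha (j : 'I_(size vs)) : \sum_(k | h k == j) a (h k) = a j.
  have [aj|] := ltrP 0 (a j).
    by have [k <-] := h4 _ aj; rewrite (sumh (fun k => a (h k))).
  move=> aj; have -> : a j = 0 by apply/eqP; rewrite eq_le aj a0.
  by rewrite big1 // => k /eqP hkj; have := h3 k; rewrite hkj ltNge aj.
split.
  rewrite -[RHS]a1 -s1; apply: eq_bigr => j _; exact: ha.
rewrite zE -s2; apply: eq_bigr => j _; congr (_ *: _); exact: esym (ha j).
Qed.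


Lemma relint_seg (s : set pt) a b t : relint s b -> s a -> 0 < t <= 1 ->
  relint s ((1 - t) *: a + t *: b).
Proof.
move=> [vs [ivs sv [l [l0 [l1 bE]]]]] sa /andP[t0 t1].
have [c [c0 [c1 aE]]] : conv vs a by rewrite -sv.
exists vs; split => //.
pose d i := (1 - t) * c i + t * l i.
have d0 i : 0 < d i.
  have t1' : 0 <= 1 - t by rewrite subr_ge0.
  have := mulr_ge0 t1' (c0 i); have := mulr_gt0 t0 (proj1 (andP (l0 i))).
  rewrite /d; lra.
have d1 : \sum_i d i = 1.
  by rewrite big_split /= -!mulr_sumr c1 l1 !mulr1 subrK.
exists d; split.
  by move=> i; rewrite d0 coef_le1 // => j; apply: ltW.
split => //.
rewrite aE bE !scaler_sumr -big_split /=; apply: eq_bigr => i _; symmetry.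
unfold d; by rewrite [in LHS]scalerDl !scalerA.
Qed.

Lemma cont_sum (T : topologicalType) (V : normedModType R) n (F : 'I_n -> T -> V) :
  (forall i, continuous (F i)) -> continuous (fun x => \sum_i F i x).
Proof.
move=> H.
suff: forall s : seq 'I_n, continuous (fun x => \sum_(i <- s) F i x) by apply.
elim=> [|i s IH] /=.
  under eq_fun do rewrite big_nil; exact: cst_continuous.
under eq_fun do rewrite big_cons.
by move=> x; apply: (continuousD (H i x) (IH x)).
Qed.

Lemma conv_closed (vs : seq pt) : closed (conv vs).
Proof.
pose n := size vs.
pose D := [set l : 'rV[R]_n | forall i, l ord0 i \in `[(0:R), 1]] `&`
          [set l : 'rV[R]_n | \sum_i l ord0 i = 1].
have cD : compact D.
  apply: compact_closedI.
    by apply: (@rV_compact _ _ (fun=> `[(0:R), 1]%classic)) => _; exact: segment_compact.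
  have -> : [set l : 'rV[R]_n | \sum_i l ord0 i = 1] =
     (fun l : 'rV[R]_n => \sum_i l ord0 i) @^-1` [set x | x = 1] by [].
  apply: preimage_closed; last exact: closed_eq.
  move=> l _; apply: cont_sum => i; exact: coord_continuous.
pose g (l : 'rV[R]_n) := \sum_i l ord0 i *: vs`_i.
have -> : conv vs = g @` D.
  apply/seteqP; split => x.
    move=> [a [a0 [a1 ->]]]; exists (\row_i a i).
      split => /=; last by under eq_bigr do rewrite mxE.
      by move=> i; rewrite mxE in_itv /= a0 coef_le1.
    by rewrite /g; apply: eq_bigr => i _; rewrite mxE.
  move=> [l [l01 l1] <-]; exists (fun i => l ord0 i); split => //.
  by move=> i; have := l01 i; rewrite in_itv /= => /andP[].
have : compact (g @` D).
  apply: continuous_compact => //; apply: continuous_subspaceT => l.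
  apply: cont_sum => i l'; apply: continuousZr_tmp; exact: coord_continuous.
by apply: compact_closed; exact: norm_hausdorff.
Qed.

End Geo.

Section Main.
Variables (R : realType) (m : nat) (AP : finType).
Variables (K : set (set 'rV[R]_m)) (V : AP -> set 'rV[R]_m).
Local Notation pt := 'rV[R]_m.
Local Notation P := (polyhedron K).
Hypothesis HK : simplicial_complex K.

Definition cellwise (S : set pt) :=
  forall t, K t -> forall x y, relint t x -> relint t y -> S x -> S y.

Lemma relint_P t x : K t -> relint t x -> P x.
Proof. by move=> Kt /relint_sub tx; exists t. Qed.

Lemma union_cellwise S : union_of_cells K S -> cellwise S.
Proof.
move=> [F [FC ->]] t Kt x y rx ry [C FCC Cx]; exists C => //.
have [t' [Kt' _ Ct']] := FC _ FCC.
rewrite Ct' in Cx *.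
by have -> : t' = t by apply: (relint_eq HK Kt' Kt Cx rx).
Qed.

Definition Wnb (x : pt) := ~` \bigcup_(t in [set t | K t /\ ~ t x]) t.

Lemma Wnb_open x : open (Wnb x).
Proof.
have [fK _ _ _] := HK.
apply: closed_openC; apply: closed_bigcup.
  by apply: sub_finite_set fK => t [].
move=> t [Kt _]; have [_ Hs _ _] := HK.
by have [vs [_ ->]] := Hs _ Kt; exact: conv_closed.
Qed.

Lemma Wnb_self x : Wnb x x.
Proof. by move=> [t [_ nt] tx]. Qed.

Lemma Wnb_carrier x z : Wnb x z -> P z -> exists t, [/\ K t, relint t z & t x].
Proof.
move=> Wz Pz; have [t [Kt rz]] := carrier HK Pz; exists t; split => //.
apply: contrapT => ntx; apply: Wz; exists t => //; exact: relint_sub rz.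
Qed.

Lemma vec_id (a b : pt) (r : R) : a - ((1 - r) *: a + r *: b) = r *: (a - b).
Proof.
rewrite scalerBl scale1r scalerBr opprD opprB addrA.
by rewrite [a + (_ - a)]addrC subrK.
Qed.

Lemma box_cell S t x y : cellwise S -> K t -> relint t x -> relint t y ->
  sub_interior K S x -> sub_interior K S y.
Proof.
move=> cS Kt rx ry [Px [U [oU Ux US]]].
split; first exact: relint_P Kt ry.
exists (Wnb y); split; [exact: Wnb_open|exact: Wnb_self|].
move=> z [Wz Pz].
have [tz [Ktz rz tzy]] := Wnb_carrier Wz Pz.
have tzx : tz x.
  by apply: (relint_in_face HK Kt Ktz ry tzy); exact: relint_sub rx.
have : nbhs x U by apply: open_nbhs_nbhs.
move/nbhs_ballP => [e e0 eU].
pose N := `|x - z|.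
have N0 : 0 <= N by apply: normr_ge0.
have e0' : 0 < e := e0.
have eN : 0 < e + N by lra.
pose r := e / (e + N).
have r0 : 0 < r by apply: divr_gt0.
have r1 : r <= 1 by rewrite ler_pdivrMr ?mul1r ?lerDl.
have rE : r * (e + N) = e by rewrite /r divfK // gt_eqF.
pose w := (1 - r) *: x + r *: z.
have rw : relint tz w by apply: relint_seg => //; rewrite r0 r1.
have Sw : S w.
  apply: US; split; last exact: relint_P Ktz rw.
  apply: eU; rewrite -ball_normE /ball_ /= /w vec_id normrZ ger0_norm ?ltW //.
  rewrite -/N; nra.
exact: cS Ktz _ _ rw rz Sw.
Qed.


Lemma seg_id (y z : pt) (r : R) : y + r *: (z - y) = (1 - r) *: y + r *: z.
Proof. by rewrite scalerBr scalerBl scale1r addrA addrAC. Qed.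

Lemma gamma_cell (Sf Sg : set pt) t x y : cellwise Sf -> K t -> relint t x -> relint t y ->
  (exists pi : R -> pt, [/\ path_in K pi, pi 0 = x,
       (forall s, s \in `]0, 1[ -> Sf (pi s)) & Sg (pi 1)]) ->
  exists pi : R -> pt, [/\ path_in K pi, pi 0 = y,
       (forall s, s \in `]0, 1[ -> Sf (pi s)) & Sg (pi 1)].
Proof.
move=> cSf Kt rx ry [pi [[pic piP] p0 pf pg]].
have A0 : (0:R) \in `[0, 1] by rewrite in_itv /= lexx ler01.
have Wn : nbhs (pi 0) (Wnb x).
  by rewrite p0; apply: open_nbhs_nbhs; split; [exact: Wnb_open|exact: Wnb_self].
have := (subspace_continuousP `[(0:R), 1]%classic pi).1 pic 0 A0 _ Wn.
move=> H.
have [e e0 He] : exists2 e : R, 0 < e & forall s, `|s| < e -> s \in `[0, 1] -> Wnb x (pi s).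
  move: H; rewrite /within /= => /nbhs_ballP [e e0 He]; exists e => // s se sA.
  apply: (He s) => //; rewrite -ball_normE /ball_ /= sub0r normrN //.
pose t0 := e / (e + 2).
have e2 : 0 < e + 2 by lra.
have t00 : 0 < t0 by apply: divr_gt0.
have tE : t0 * (e + 2) = e by rewrite /t0 divfK // gt_eqF.
have t01 : t0 < 1 by nra.
have t0e : t0 < e by nra.
have t0A : t0 \in `[0, 1] by rewrite in_itv /= !ltW.
have Wz : Wnb x (pi t0) by apply: He => //; rewrite ger0_norm ?ltW.
have [tz [Ktz rz tzx]] := Wnb_carrier Wz (piP _ t0A).
have ty : tz y.
  by apply: (relint_in_face HK Kt Ktz rx tzx); exact: relint_sub ry.
have Sz : Sf (pi t0) by apply: pf; rewrite in_itv /= t00 t01.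
pose seg s := y + (s / t0) *: (pi t0 - y).
pose pi' s := if s <= t0 then seg s else pi s.
have segr s : 0 < s <= t0 -> relint tz (seg s).
  move=> /andP[s0 st]; rewrite /seg seg_id; apply: relint_seg => //.
  by rewrite divr_gt0 //= ler_pdivrMr // mul1r.
have seg0 : seg 0 = y by rewrite /seg mul0r scale0r addr0.
exists pi'; split.
- split.
  + have -> : `[(0:R), 1]%classic = `[0, t0]%classic `|` `[t0, 1]%classic.
      apply/seteqP; split => s; rewrite /= !in_itv /=.
        move=> /andP[s0 s1]; case: (leP s t0) => st; [left|right].
          by apply/andP.
        by apply/andP; split => //; apply: ltW.
      by case => /andP[h1 h2]; apply/andP; split; lra.
    apply: withinU_continuous; [exact: interval_closed|exact: interval_closed| |].
    * apply: (@subspace_eq_continuous _ _ _ seg).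
        move=> s; rewrite inE /= in_itv /= => /andP[_ st]; rewrite /pi'. rewrite /from_subspace /=. by rewrite st.
      apply: continuous_subspaceT => s; rewrite /seg.
      have hM := @continuousM R R id (cst t0^-1) s cvg_id (@cst_continuous _ _ _ s).
      have hZ := @continuousZr_tmp R 'rV[R]_m R (fun s => s / t0) (pi t0 - y) s hM.
      have hD := @continuousD R 'rV[R]_m R (cst y) (fun s => (s / t0) *: (pi t0 - y)) s
        (@cst_continuous _ _ _ s) hZ.
      exact: hD.
    * apply: (@subspace_eq_continuous _ _ _ pi).
        move=> s; rewrite inE /= in_itv /= => /andP[ts _]; rewrite /pi' /from_subspace /=.
        case: leP => // st; have -> : s = t0 by apply/eqP; rewrite eq_le st ts.
        by rewrite /seg divff ?gt_eqF // scale1r addrC subrK.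
      apply: continuous_subspaceW pic => s; rewrite /= !in_itv /= => /andP[ts ->].
      by rewrite andbT; apply: le_trans ts; apply: ltW.
  + move=> s; rewrite in_itv /= => /andP[s0 s1]; rewrite /pi'; case: leP => st.
      case: (eqVneq s 0) => [->|sn0]; first by rewrite seg0; exact: relint_P Kt ry.
      apply: relint_P Ktz (segr s _).
      by rewrite st andbT lt_neqAle eq_sym sn0 s0.
    by apply: piP; rewrite in_itv /= s0 s1.
- by rewrite /pi' ltW.
- move=> s; rewrite in_itv /= => /andP[s0 s1]; rewrite /pi'; case: leP => st.
    by apply: (cSf tz Ktz _ _ rz (segr s _) Sz); rewrite s0 st.
  by apply: pf; rewrite in_itv /= s0 s1.
- rewrite /pi'; case: leP => // h; exfalso; move: (lt_le_trans t01 h); by rewrite ltxx.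
Qed.


Lemma cells_sub S : union_of_cells K S -> S `<=` P.
Proof.
move=> [F [FC ->]] z [C FC' Cz]; have [t [Kt _ Ct]] := FC _ FC'.
by rewrite Ct in Cz; exact: relint_P Kt Cz.
Qed.

Lemma sat_cellwise (HV : forall p, union_of_cells K (V p)) phi :
  cellwise (sat K V phi) /\ sat K V phi `<=` P.
Proof.
elim: phi => [|p|f [cf Pf]|f [cf Pf] g [cg Pg]|f [cf Pf]|f [cf Pf] g [cg Pg]] /=.
- by split=> // t Kt x y _ ry _; exact: relint_P Kt ry.
- by split; [exact: union_cellwise | exact: cells_sub].
- split; last by move=> z [].
  move=> t Kt x y rx ry [_ nx]; split; first exact: relint_P Kt ry.
  by move=> Sy; apply: nx; apply: cf Kt _ _ ry rx Sy.
- split; last by move=> z [/Pf].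
  move=> t Kt x y rx ry [Sx Tx]; split; [exact: cf Kt _ _ rx ry Sx|exact: cg Kt _ _ rx ry Tx].
- split; last by move=> z [].
  by move=> t Kt x y rx ry; exact: box_cell cf Kt rx ry.
- split; last by move=> z [].
  move=> t Kt x y rx ry [_ H]; split; first exact: relint_P Kt ry.
  exact: gamma_cell cf Kt rx ry H.
Qed.

End Main.

Theorem mainTheorem2 (R : realType) (m : nat) (AP : finType)
    (K : set (set 'rV[R]_m)) (V : AP -> set 'rV[R]_m) :
  polyhedral_model K V ->
  (forall (C : set 'rV[R]_m) (x y : 'rV[R]_m), is_cell K C -> C x -> C y ->
     forall phi : slcs AP, sat K V phi x <-> sat K V phi y) /\
  (forall phi : slcs AP, exists F : set (set 'rV[R]_m),
     [/\ finite_set F, (forall C, F C -> is_cell K C) &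
         sat K V phi = \bigcup_(C in F) C]).
Proof.
move=> [HK HV].
have SC := fun phi => sat_cellwise HK HV phi.
split.
  move=> C x y [t [Kt _ ->]] rx ry phi; split.
    exact: (proj1 (SC phi)) t Kt x y rx ry.
  exact: (proj1 (SC phi)) t Kt y x ry rx.
move=> phi; exists [set C | is_cell K C /\ C `<=` sat K V phi]; split.
- have [fK _ _ _] := HK.
  apply: (sub_finite_set _ (finite_image (@relint R m) fK)).
  by move=> C [[t [Kt _ ->]] _]; exists t.
- by move=> C [].
- apply/seteqP; split => z.
    move=> Sz; have Pz := proj2 (SC phi) _ Sz.
    have [t [Kt rz]] := carrier HK Pz.
    exists (relint t) => //; split.
      by exists t; split => //; exists z; exact: relint_sub rz.
    by move=> w rw; exact: (proj1 (SC phi)) t Kt z w rz rw Sz.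
  by move=> [C [_ CS] Cz]; exact: CS.
Qed.
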